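(* Let $N$ be a set of $n$ elements and $v:2^N\to\mathbb{R}_+$ a function with $v(\emptyset)=0$. Consider the randomized procedure: pick a size $k\in\{1,\dots,n\}$ with probability $(k\cdot H_n)^{-1}$, where $H_n=\sum_{j=1}^n\frac1j$, and then pick a uniformly random set $S\subseteq N$ of size $k$. Then $$\mathbb{E}\Big[\sum_{i\in S}v(\{i\}\mid S\setminus\{i\})\Big]=\frac{1}{H_n}v(N).$$
   Context: Marginal value: $v(\{i\}\mid T)=v(T\cup\{i\})-v(T)$. *)

(* Defs.v *)
From mathcomp Require Import all_boot all_order all_algebra.
Set Implicit Arguments. Unset Strict Implicit. Unset Printing Implicit Defensive.
Import Order.TTheory GRing.Theory Num.Theory.
Local Open Scope ring_scope.

Definition marginal (R : numDomainType) (T : finType) (v : {set T} -> R)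
  (A B : {set T}) : R := v (B :|: A) - v B.

Definition harmonic (R : numFieldType) (n : nat) : R :=
  \sum_(1 <= j < n.+1) (j%:R)^-1.

Definition exp_random_size (R : numFieldType) (T : finType)
  (X : {set T} -> R) : R :=
  \sum_(1 <= k < #|T|.+1)
    ((k%:R * harmonic R #|T|)^-1 *
     (('C(#|T|, k))%:R^-1 * \sum_(S : {set T} | #|S| == k) X S)).

(* Main.v *)
Require Import Defs.
From mathcomp Require Import all_boot all_order all_algebra.
From mathcomp Require Import ring lra.
Import Order.TTheory GRing.Theory Num.Theory.
Local Open Scope ring_scope.

Section Aux.
Variables (R : realFieldType) (T : finType) (v : {set T} -> R).

Definition Asum (k : nat) : R := \sum_(S : {set T} | #|S| == k) v S.

Lemma dc (k : nat) :
  \sum_(S : {set T} | #|S| == k.+1) \sum_(i in S) v (S :\ i)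
  = (#|T| - k)%:R * Asum k.
Proof.
rewrite (exchange_big_dep predT) //=.
transitivity (\sum_(i : T) \sum_(U : {set T} | (#|U| == k) && (i \notin U)) v U).
  apply: eq_bigr => i _.
  rewrite (reindex_onto (fun U => i |: U) (fun S => S :\ i)); last first.
    by move=> S /andP[_ iS]; rewrite setD1K.
  apply: eq_big => U.
    case: (boolP (i \in U)) => iU /=.
      rewrite setU11 andbT andbF.
      apply/negbTE/negP => /andP[_ /eqP E].
      have : i \in (i |: U) :\ i by rewrite E.
      by rewrite setD11.
    by rewrite setU11 andbT setU1K // eqxx andbT cardsU1 iU andbT.
  by move=> /andP[_ /eqP ->].
rewrite (exchange_big_dep (fun U : {set T} => #|U| == k)); last by move=> i U _ /andP[].
rewrite /Asum big_distrr /=.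
apply: eq_bigr => U /eqP HU.
rewrite (eq_bigl (fun i => i \in ~: U)); last by move=> i; rewrite in_setC HU eqxx.
rewrite sumr_const mulr_natl; congr (_ *+ _).
by rewrite -(cardsC U) HU addKn.
Qed.

End Aux.

Theorem mainTheorem16 (R : realFieldType) (T : finType) (v : {set T} -> R)
  (hpos : (0 < #|T|)%N) (hv0 : v set0 = 0) (hvnn : forall S, 0 <= v S) :
  exp_random_size (fun S => \sum_(i in S) marginal v [set i] (S :\ i))
  = (harmonic R #|T|)^-1 * v [set: T].
Proof.
set n := #|T|.
have Hpos : 0 < harmonic R n.
  rewrite /harmonic.
  have [m ->] : exists m, n = m.+1 by exists n.-1; rewrite prednK.
  rewrite big_nat_recl // invr1.
  apply: ltr_pwDl => //. apply: sumr_ge0 => i _; by rewrite invr_ge0.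
set H := harmonic R n.
pose a k := ('C(n, k)%:R)^-1 * Asum R T v k.
rewrite /exp_random_size -/n.
rewrite (telescope_sumr_eq (fun k => H^-1 * a k.-1)) //; last first.
  move=> k /andP[k1 kn]; case: k k1 kn => // j _ kn /=.
  have Hs : \sum_(S : {set T} | #|S| == j.+1)
      \sum_(i in S) marginal v [set i] (S :\ i)
      = j.+1%:R * Asum R T v j.+1 - (n - j)%:R * Asum R T v j.
    rewrite -dc /Asum mulr_sumr -sumrB; apply: eq_bigr => S /eqP HS.
    rewrite /marginal sumrB; congr (_ - _).
    rewrite (eq_bigr (fun _ => v S)); last first.
      by move=> i iS; rewrite setUC setD1K.
    by rewrite sumr_const HS mulr_natl.
  rewrite Hs /a /= .
  have hb := mul_bin_left n j.
  have b1 : (0 < 'C(n, j.+1))%N by rewrite bin_gt0.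
  have b0 : (0 < 'C(n, j))%N by rewrite bin_gt0 ltnW.
  have hbR : j.+1%:R * 'C(n, j.+1)%:R = (n - j)%:R * 'C(n, j)%:R :> R
    by rewrite -!natrM hb.
  have c1 : 'C(n, j.+1)%:R != 0 :> R by rewrite pnatr_eq0 -lt0n.
  have c0 : 'C(n, j)%:R != 0 :> R by rewrite pnatr_eq0 -lt0n.
  have j0 : j.+1%:R != 0 :> R by rewrite pnatr_eq0.
  have H0 : H != 0 by rewrite gt_eqF.
  have -> : (n - j)%:R = j.+1%:R * 'C(n, j.+1)%:R / 'C(n, j)%:R :> R.
    by rewrite hbR mulfK.
  rewrite -/H; move: j0 c1 c0 H0.
  move: (j.+1%:R : R) ('C(n, j.+1)%:R : R) ('C(n, j)%:R : R) H (Asum R T v j.+1) (Asum R T v j).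
  move=> x c d h A B x0 c0' d0 h0.
  by field; rewrite x0 c0' d0 h0.
rewrite /= /a bin0 binn invr1 !mul1r.
have -> : Asum R T v n = v [set: T].
  rewrite /Asum (big_pred1 [set: T]) // => S /=.
  by rewrite eqEcard subsetT cardsT eqn_leq max_card.
have -> : Asum R T v 0 = 0.
  rewrite /Asum (big_pred1 set0) // => S /=; by rewrite cards_eq0.
by rewrite mulr0 subr0.
Qed.
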